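(* Let $k>0$, $d>0$, $a>0$. There exists $\Lambda>0$ such that for every $\lambda\in\mathbb{R}$ with $|\lambda|>\Lambda$ there is no $\mu\in\mathbb{C}$ with $\mathrm{Re}\,\mu\ge0$ satisfying $$\frac12\int_{-1}^{1}\frac{1-k+\mathrm{i}\,\frac{a\lambda s}{1+d\lambda^2}}{1+k\mu+\mathrm{i}k\lambda s}\,ds=1 .$$ In other words, the linearized system (L) has no non-decaying Fourier modes at high frequency: the set of wave numbers that carry unstable modes is bounded.
   Context: Let $S^2\subset\mathbb{R}^3$ be the unit sphere, with surface measure $d\Omega$ (total mass $4\pi$). Write $\mathbf{v}=(v_1,v_2,v_3)\in S^2$ and $x\in\mathbb{R}$. Fix parameters $k>0$, $d>0$, and $a=F'(0)>0$. The linearized system (L), for the unknowns $g(x,\mathbf v)$ and $S_g(x)$ and a growth rate $\mu\in\mathbb{C}$, is $$k(\mu g+v_1\partial_x g)=\rho_g+a\,v_1\partial_x S_g-g-k\rho_g,\qquad -d\,\partial_{xx}S_g+S_g=\rho_g,\qquad \rho_g=\frac1{4\pi}\int_{S^2}g\,d\Omega .$$ A nonzero solution of (L) of the form $g=\hat g(\mathbf v)e^{\mathrm{i}\lambda x}$ with growth rate $\mu$ (where $\mathrm{Re}\,\mu>-1/k$) exists exactly when $\mu$ satisfies the displayed dispersion relation. *)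

(* Defs.v *)
(* real analysis (Riemann integral) with complex numbers
   represented by their real and imaginary parts. *)
From Stdlib Require Import Reals.
Open Scope R_scope.

Definition cdiv_re (x1 y1 x2 y2 : R) : R :=
  (x1 * x2 + y1 * y2) / (x2 ^ 2 + y2 ^ 2).
Definition cdiv_im (x1 y1 x2 y2 : R) : R :=
  (y1 * x2 - x1 * y2) / (x2 ^ 2 + y2 ^ 2).

(* Integrand of the dispersion relation, with mu = p + i q:
     (1 - k + i a lam s / (1 + d lam^2)) / (1 + k mu + i k lam s). *)
Definition disp_re (k a d lam p q : R) (s : R) : R :=
  cdiv_re (1 - k) (a * lam * s / (1 + d * lam ^ 2)) (1 + k * p) (k * q + k * lam * s).
Definition disp_im (k a d lam p q : R) (s : R) : R :=
  cdiv_im (1 - k) (a * lam * s / (1 + d * lam ^ 2)) (1 + k * p) (k * q + k * lam * s).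

(* Main.v *)
Require Import Defs.
From Stdlib Require Import Reals Lra.
From Coquelicot Require Import Coquelicot.
Open Scope R_scope.

Lemma atan_comp_deriv (k lam q A s : R) : A <> 0 ->
  is_derive (fun s => atan ((k*q + k*lam*s)/A)) s
    (k*lam/A * / (1 + ((k*q + k*lam*s)/A)^2)).
Proof.
  intros HA.
  apply (is_derive_comp atan (fun s => (k*q + k*lam*s)/A)).
  - apply is_derive_Reals. apply derivable_pt_lim_atan.
  - auto_derive; auto; field; auto.
Qed.

Lemma pointwise (k a d lam p q s : R) : 0 < k -> 0 < d -> 0 <= p -> -1 <= s <= 1 ->
  disp_re k a d lam p q s <=
  Rabs (1-k) * ((1+k*p) / ((1+k*p)^2 + (k*q+k*lam*s)^2))
  + Rabs (a * lam / (1 + d * lam ^ 2)) / 2.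
Proof.
  intros hk hd hp hs. unfold disp_re, cdiv_re.
  set (A := 1 + k*p). set (B := k*q+k*lam*s). set (c := a * lam / (1 + d * lam ^ 2)).
  assert (HA : 1 <= A) by (unfold A; nra).
  assert (HD : 0 < A^2 + B^2) by nra.
  replace (a * lam * s / (1 + d * lam ^ 2)) with (c*s) by (unfold c, Rdiv; ring).
  unfold Rdiv at 1. rewrite Rmult_plus_distr_r.
  apply Rplus_le_compat.
  - unfold Rdiv. rewrite <- Rmult_assoc. apply Rmult_le_compat_r.
    + left; apply Rinv_0_lt_compat; auto.
    + apply Rmult_le_compat_r; [lra|]. apply Rle_abs.
  - apply (Rmult_le_reg_r (A^2+B^2)); auto.
    rewrite Rmult_assoc, Rinv_l by lra. rewrite Rmult_1_r.
    assert (H1 : c*(s*B) <= Rabs c * Rabs B).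
    { rewrite <- Rabs_mult. eapply Rle_trans; [apply Rle_abs|].
      rewrite !Rabs_mult. assert (Rabs s <= 1) by (apply Rabs_le; lra).
      assert (0 <= Rabs c) by apply Rabs_pos. assert (0 <= Rabs B) by apply Rabs_pos.
      apply Rmult_le_compat_l; auto. rewrite <- (Rmult_1_l (Rabs B)) at 2.
      apply Rmult_le_compat_r; auto. }
    assert (H2 : 2 * Rabs B <= A^2 + B^2).
    { assert (Rabs B * Rabs B = B^2) by (rewrite <- Rabs_mult; simpl; rewrite Rmult_1_r; apply Rabs_right; nra).
      assert (0 <= (Rabs B - 1)^2) by (apply pow2_ge_0). nra. }
    assert (0 <= Rabs c) by apply Rabs_pos.
    assert (Rabs c * (2 * Rabs B) <= Rabs c * (A^2+B^2)) by (apply Rmult_le_compat_l; auto).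
    nra.
Qed.

Lemma int_g (k lam q A w C : R) : 0 < k -> lam <> 0 -> 1 <= A ->
  is_RInt (fun s => w * (A / (A^2 + (k*q+k*lam*s)^2)) + C / 2) (-1) 1
    (w * (atan ((k*q + k*lam*1)/A) - atan ((k*q + k*lam*(-1))/A)) / (k*lam) + C).
Proof.
  intros hk hl hA.
  set (G := fun s => w * (atan ((k*q + k*lam*s)/A) / (k*lam)) + C/2 * s).
  replace (w * (atan ((k*q + k*lam*1)/A) - atan ((k*q + k*lam*(-1))/A)) / (k*lam) + C)
    with (minus (G 1) (G (-1))) by (unfold G, minus, plus, opp; simpl; field; lra).
  apply (@is_RInt_derive R_CompleteNormedModule G).
  - intros x _. unfold G.
    apply (is_derive_ext (fun s => w / (k*lam) * atan ((k*q + k*lam*s)/A) + C/2 * s)).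
    { intros t. change (w / (k * lam) * atan ((k * q + k * lam * t) / A) + C / 2 * t =
 w * (atan ((k * q + k * lam * t) / A) / (k * lam)) + C / 2 * t). unfold Rdiv; ring. }
    assert (HA0 : A <> 0) by lra.
    pose proof (atan_comp_deriv k lam q A x HA0) as H1.
    assert (H2 : is_derive (fun s => C/2*s) x (C/2)) by (auto_derive; simpl; lra).
    pose proof (is_derive_plus _ _ x _ _ (is_derive_scal _ x (w/(k*lam)) _ H1) H2) as H3.
    assert (E : w * (A / (A ^ 2 + (k * q + k * lam * x) ^ 2)) + C / 2 =
      plus (scal (w/(k*lam)) (k * lam / A * / (1 + ((k * q + k * lam * x) / A) ^ 2))) (C/2)).
    { unfold plus, scal; simpl; unfold mult; simpl. field.
      pose proof (Rle_0_sqr (k * q + k * lam * x)); unfold Rsqr in *.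
      repeat split; try lra. apply Rgt_not_eq. nra. }
    rewrite E. exact H3.
  - intros x _. apply (@ex_derive_continuous R_AbsRing R_NormedModule). auto_derive.
    pose proof (Rle_0_sqr (k * q + k * lam * x)); unfold Rsqr in *. rewrite !Rmult_1_r. apply Rgt_not_eq. assert (1 <= A*A) by nra. nra.
Qed.

Theorem mainTheorem3 (k d a : R) (hk : 0 < k) (hd : 0 < d) (ha : 0 < a) :
  exists Lam : R, 0 < Lam /\
    forall lam : R, Rabs lam > Lam ->
      ~ (exists p q : R, 0 <= p /\
           exists (pr_re : Riemann_integrable (disp_re k a d lam p q) (-1) 1)
                  (pr_im : Riemann_integrable (disp_im k a d lam p q) (-1) 1),
             / 2 * RiemannInt pr_re = 1 /\ / 2 * RiemannInt pr_im = 0).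
Proof.
  set (w := Rabs (1-k)).
  assert (hw : 0 <= w) by apply Rabs_pos.
  set (X := w * PI / k + a / d).
  assert (hX : 0 <= X).
  { unfold X. pose proof PI_RGT_0. assert (0 <= w*PI/k).
    { unfold Rdiv. apply Rmult_le_pos; [nra|]. left; apply Rinv_0_lt_compat; lra. }
    assert (0 < a/d) by (apply Rdiv_lt_0_compat; lra). lra. }
  exists (X + 1). split; [lra|].
  intros lam Hl [p [q [hp [pr_re [pr_im [H _]]]]]].
  assert (hL : 0 < Rabs lam) by lra.
  assert (hl0 : lam <> 0) by (intro E; rewrite E, Rabs_R0 in hL; lra).
  set (A := 1 + k*p). assert (hA : 1 <= A) by (unfold A; nra).
  set (C := Rabs (a * lam / (1 + d * lam ^ 2))).
  set (D := atan ((k*q + k*lam*1)/A) - atan ((k*q + k*lam*(-1))/A)).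
  pose proof (int_g k lam q A w C hk hl0 hA) as Hg. fold D in Hg.
  rewrite <- RInt_Reals in H.
  assert (Hle : RInt (disp_re k a d lam p q) (-1) 1 <= w * D / (k*lam) + C).
  { rewrite <- (is_RInt_unique _ _ _ _ Hg).
    apply RInt_le; [lra | apply ex_RInt_Reals_1; exact pr_re | eexists; exact Hg |].
    intros x Hx. apply pointwise; auto; lra. }
  assert (HD : w * D / (k*lam) <= w * PI / (k * Rabs lam)).
  { unfold Rdiv. rewrite !Rmult_assoc. apply Rmult_le_compat_l; auto.
    eapply Rle_trans; [apply Rle_abs|]. rewrite Rabs_mult, Rabs_inv, Rabs_mult, (Rabs_right k) by lra.
    apply Rmult_le_compat_r. { left; apply Rinv_0_lt_compat; nra. }
    unfold D. pose proof (atan_bound ((k*q + k*lam*1)/A)). pose proof (atan_bound ((k*q + k*lam*(-1))/A)).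
    apply Rabs_le. lra. }
  assert (HC : C <= a / (d * Rabs lam)).
  { unfold C. rewrite Rabs_div.
    2:{ apply Rgt_not_eq. assert (0 <= lam^2) by apply pow2_ge_0. nra. }
    rewrite Rabs_mult, (Rabs_right a) by lra.
    rewrite (Rabs_right (1 + d*lam^2)).
    2:{ assert (0 <= lam^2) by apply pow2_ge_0. nra. }
    assert (E2 : lam^2 = Rabs lam * Rabs lam).
    { rewrite <- Rabs_mult. simpl. rewrite Rmult_1_r. symmetry. apply Rabs_right. nra. }
    rewrite E2. set (L := Rabs lam) in *.
    assert (0 < d * L) by nra. assert (0 < 1 + d*(L*L)) by nra.
    apply Rmult_le_reg_r with ((1 + d * (L * L)) * (d * L)).
    { nra. }
    replace (a * L / (1 + d * (L * L)) * ((1 + d * (L * L)) * (d * L))) with (a*L*(d*L)) by (field; lra).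
    replace (a / (d * L) * ((1 + d * (L * L)) * (d * L))) with (a * (1 + d * (L * L))) by (field; lra).
    nra. }
  assert (Hfin : w * PI / (k * Rabs lam) + a / (d * Rabs lam) = X / Rabs lam).
  { unfold X. field. lra. }
  assert (HX1 : X / Rabs lam < 1).
  { apply (Rmult_lt_reg_r (Rabs lam)); auto. unfold Rdiv. rewrite Rmult_assoc, Rinv_l by lra. lra. }
  lra.
Qed.
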